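(* Let $(\mathcal{X},\mathcal{A})$ be a measurable space and $\pi$ a probability distribution of a random pair $(X,Y)$ on $\mathcal{X}\times\{-1,1\}$. Let $1\le\kappa<+\infty$. Then $\pi$ satisfies the margin assumption $\mathrm{MA}(\kappa)$ if and only if $\pi$ satisfies the margin assumption for hinge risk $\mathrm{MAH}(\kappa)$.
   Context: Let $\eta(x)=\mathbb{P}(Y=1\mid X=x)$ and let $f^*(x)=\mathrm{sign}(2\eta(x)-1)$ be the Bayes rule. For a measurable $f:\mathcal{X}\to\{-1,1\}$, $R(f)=\mathbb{P}(Y\neq f(X))$ and $R^*=R(f^* )=\min_f R(f)$. For a measurable $f:\mathcal{X}\to\mathbb{R}$, the hinge risk is $A(f)=\mathbb{E}[\max(1-Yf(X),0)]$ and $A^*=\inf_{f:\mathcal{X}\to\mathbb{R}}A(f)$ (attained at $f^*$). $\pi$ satisfies $\mathrm{MA}(\kappa)$ if there exists $c_0>0$ such that $\mathbb{E}[|f(X)-f^*(X)|]\le c_0(R(f)-R^* )^{1/\kappa}$ for every measurable $f:\mathcal{X}\to\{-1,1\}$. $\pi$ satisfies $\mathrm{MAH}(\kappa)$ if there exists $c>0$ such that $\mathbb{E}[|f(X)-f^*(X)|]\le c(A(f)-A^* )^{1/\kappa}$ for every measurable $f:\mathcal{X}\to[-1,1]$. *)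

(* Defs.v *)
From HB Require Import structures.
From mathcomp Require Import all_boot all_order all_algebra.
From mathcomp Require Import all_classical all_reals all_analysis.
Set Implicit Arguments. Unset Strict Implicit. Unset Printing Implicit Defensive.
Import Order.TTheory GRing.Theory Num.Theory.
Local Open Scope classical_set_scope.
Local Open Scope ring_scope.

(* Labels: Y = true encodes the label 1, Y = false encodes the label -1. *)
Definition ylab {R : realType} (b : bool) : R := if b then 1 else -1.

(* eta is a version of P(Y = 1 | X = x) for the joint law pi of (X,Y):
   measurable, [0,1]-valued, and pi(X in A, Y = 1) = E[1_{X in A} eta(X)]. *)
Definition cond_prob_version d (T : measurableType d) (R : realType)
  (pi : probability (T * bool)%type R) (eta : T -> R) : Prop :=
  [/\ measurable_fun setT eta,
      (forall x, 0 <= eta x <= 1) &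
      (forall A : set T, measurable A ->
         pi (A `*` [set true]) = (\int[pi]_(p in A `*` setT) (eta p.1)%:E)%E)].

(* sign, with the convention sign(0) = 1 so that f* : X -> {-1,1} *)
Definition sgn1 {R : realType} (t : R) : R := if 0 <= t then 1 else -1.

Definition bayes {T} {R : realType} (eta : T -> R) (x : T) : R :=
  sgn1 (2 * eta x - 1).

Definition risk d (T : measurableType d) (R : realType)
  (pi : probability (T * bool)%type R) (f : T -> R) : \bar R :=
  pi [set p | ylab p.2 != f p.1].

Definition hinge_risk d (T : measurableType d) (R : realType)
  (pi : probability (T * bool)%type R) (f : T -> R) : \bar R :=
  (\int[pi]_p (Num.max (1 - ylab p.2 * f p.1) 0)%:E)%E.

Definition hinge_risk_star d (T : measurableType d) (R : realType)
  (pi : probability (T * bool)%type R) : \bar R :=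
  ereal_inf [set hinge_risk pi f | f in [set f : T -> R | measurable_fun setT f]].

Definition l1_dist d (T : measurableType d) (R : realType)
  (pi : probability (T * bool)%type R) (eta : T -> R) (f : T -> R) : \bar R :=
  (\int[pi]_p (`| f p.1 - bayes eta p.1 |)%:E)%E.

Definition MA d (T : measurableType d) (R : realType)
  (pi : probability (T * bool)%type R) (eta : T -> R) (kappa : R) : Prop :=
  exists c0 : R, 0 < c0 /\
    forall f : T -> R, measurable_fun setT f ->
      (forall x, f x = 1 \/ f x = -1) ->
      (l1_dist pi eta f <=
        (c0 * (fine (risk pi f - risk pi (bayes eta))) `^ (kappa^-1))%:E)%E.

Definition MAH d (T : measurableType d) (R : realType)
  (pi : probability (T * bool)%type R) (eta : T -> R) (kappa : R) : Prop :=
  exists c : R, 0 < c /\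
    forall f : T -> R, measurable_fun setT f ->
      (forall x, -1 <= f x <= 1) ->
      (l1_dist pi eta f <=
        (c * (fine (hinge_risk pi f - hinge_risk_star pi)) `^ (kappa^-1))%:E)%E.

(* Main.v *)
Require Import Defs.
From HB Require Import structures.
From mathcomp Require Import all_boot all_order all_algebra.
From mathcomp Require Import all_classical all_reals all_analysis.
From mathcomp Require Import measurable_realfun ring lra.
Import Order.TTheory GRing.Theory Num.Theory.
Local Open Scope ring_scope.

Section Key.
Variable R : realType.
Implicit Types k K m a n v t x : R.

Lemma powR_kinv k x : 0 <= x -> 0 < k -> (x `^ k^-1) `^ k = x.
Proof.
move=> x0 k0; rewrite -powRrM mulVf ?gt_eqF// powRr1//.
Qed.

Lemma powR_invk k x : 0 <= x -> 0 < k -> (x `^ k) `^ k^-1 = x.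
Proof.
move=> x0 k0; rewrite -powRrM mulfV ?gt_eqF// powRr1//.
Qed.

Lemma le_powR_inv n x k : 0 <= n -> 0 <= x -> 0 < k -> n <= x `^ k^-1 -> n `^ k <= x.
Proof.
move=> n0 x0 k0 h.
rewrite -(powR_kinv _ _ x0 k0); apply: ge0_ler_powR => //; first exact: ltW.
by rewrite nnegrE powR_ge0.
Qed.

Lemma key_sub k K v n : 1 <= k -> 0 < K -> 0 < v -> v <= n ->
  n `^ k <= K * (v `^ (k - 1) / (2 * K)) * n -> False.
Proof.
move=> k1 K0 v0 vn h.
have n0 : 0 < n by apply: lt_le_trans vn.
have k0 : 0 < k by apply: lt_le_trans k1.
have e : n `^ k = n * n `^ (k - 1) by rewrite mulr_powRB1 // ltW.
have le1 : v `^ (k - 1) <= n `^ (k - 1).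
  apply: ge0_ler_powR => //; rewrite ?subr_ge0 ?nnegrE //; [exact: ltW v0 | exact: le_trans (ltW v0) vn].
have p0 : 0 < v `^ (k - 1) by apply: powR_gt0.
have : K * (v `^ (k - 1) / (2 * K)) * n = n * v `^ (k - 1) / 2.
  by field; rewrite gt_eqF.
move=> e2; rewrite e2 e in h.
have : n * v `^ (k - 1) <= n * n `^ (k - 1) by rewrite ler_pM2l.
have : 0 < n * v `^ (k - 1) by rewrite mulr_gt0.
lra.
Qed.

Lemma key k K m a : 1 <= k -> 0 < K -> 0 <= m -> 0 <= a ->
  (forall t, 0 < t -> exists n, [/\ 0 <= n, m <= n + a / t & n `^ k <= K * t * n]) ->
  m <= (1 + 2 * K) * a `^ k^-1.
Proof.
move=> k1 K0 m0 a0 H.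
have k0 : 0 < k by apply: lt_le_trans k1.
have [ap|] := ltP 0 a; last first.
  move=> a_le0; have a00 : a = 0 by apply/eqP; rewrite eq_le a_le0 a0.
  rewrite a00 powR0 ?invr_eq0 ?gt_eqF // mulr0.
  rewrite leNgt; apply/negP => mp.
  have tp : 0 < m `^ (k - 1) / (2 * K) by rewrite divr_gt0 ?powR_gt0 ?mulr_gt0.
  have [n [n0 mn hn]] := H _ tp.
  apply: (key_sub _ _ _ _ k1 K0 mp _ hn).
  by move: mn; rewrite a00 mul0r addr0.
set u := a `^ k^-1.
have u0 : 0 < u by apply: powR_gt0.
have tp : 0 < u `^ (k - 1) / (2 * K) by rewrite divr_gt0 ?powR_gt0 ?mulr_gt0.
have [n [n0 mn hn]] := H _ tp.
have nu : n <= u.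
  rewrite leNgt; apply/negP => un.
  exact: (key_sub _ _ _ _ k1 K0 u0 (ltW un) hn).
have au : a = u * u `^ (k - 1).
  by rewrite mulr_powRB1 ?ltW // powR_kinv.
have p0 : 0 < u `^ (k - 1) by apply: powR_gt0.
have : a / (u `^ (k - 1) / (2 * K)) = 2 * K * u.
  by rewrite au; field; rewrite ?gt_eqF //.
move=> e; rewrite e in mn.
lra.
Qed.

End Key.

Section PW.
Variable R : realType.
Implicit Types e f : R.

Lemma sgn1_cases e : (0 <= e /\ sgn1 e = 1 /\ `|e| = e) \/ (e < 0 /\ sgn1 e = -1 /\ `|e| = - e).
Proof.
rewrite /sgn1; case: ifPn => H.
  by left; rewrite ger0_norm.
by right; rewrite -ltNge in H; rewrite ltr0_norm.
Qed.

Lemma maxr_cases (x : R) : (0 <= x /\ Num.max x 0 = x) \/ (x < 0 /\ Num.max x 0 = 0).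
Proof.
have [h|h] := leP 0 x.
  by left; split => //; apply/max_idPl.
by right; split => //; apply/max_idPr; exact: ltW.
Qed.

Lemma pw_risk e f : 0 <= e <= 1 -> (f = 1 \/ f = -1) ->
  (1 - f) / 2 * e + (1 + f) / 2 * (1 - e) =
  (1 - `|2 * e - 1|) / 2 + `|2 * e - 1| * `|f - sgn1 (2 * e - 1)| / 2.
Proof.
move=> /andP[e0 e1] hf.
case: (sgn1_cases (2 * e - 1)) => -[H [-> ->]];
  case: hf => ->; rewrite ?subrr ?normr0;
  try (have -> : `|1 - -1| = 2 :> R by rewrite opprK ger0_norm);
  try (have -> : `|-1 - 1| = 2 :> R by rewrite -opprD normrN ger0_norm);
  lra.
Qed.

Lemma pw_hinge_ge e f : 0 <= e <= 1 ->
  1 - `|2 * e - 1| <= Num.max (1 - f) 0 * e + Num.max (1 + f) 0 * (1 - e).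
Proof.
move=> /andP[e0 e1].
case: (sgn1_cases (2 * e - 1)) => -[H [_ ->]];
case: (maxr_cases (1 - f)) => -[H1 ->];
case: (maxr_cases (1 + f)) => -[H2 ->]; nra.
Qed.

Lemma pw_hinge_eq e f : 0 <= e <= 1 -> -1 <= f <= 1 ->
  Num.max (1 - f) 0 * e + Num.max (1 + f) 0 * (1 - e) =
  (1 - `|2 * e - 1|) + `|2 * e - 1| * `|f - sgn1 (2 * e - 1)|.
Proof.
move=> /andP[e0 e1] /andP[f0 f1].
rewrite (max_idPl _); last by rewrite subr_ge0.
rewrite (max_idPl _); last by lra.
case: (sgn1_cases (2 * e - 1)) => -[H [-> ->]].
  rewrite ler0_norm; last by lra.
  ring.
rewrite ger0_norm; last by lra.
ring.
Qed.

End PW.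

Local Open Scope classical_set_scope.

Section L.
Local Open Scope ereal_scope.
Context d1 d2 (X : measurableType d1) (Y : measurableType d2) (R : realType).
Variables (mu : {measure set X -> \bar R}) (E : set X) (mE : measurable E).
Variables (g : X -> R) (mg : measurable_fun setT g) (g0 : forall x, (0 <= g x)%R).
Variables (phi : X -> Y) (mphi : measurable_fun setT phi).
Hypothesis H : forall A, measurable A ->
  mu (E `&` phi @^-1` A) = \int[mu]_(x in phi @^-1` A) (g x)%:E.
Import HBNNSimple.

Lemma dens_L (f : Y -> \bar R) : (forall y, 0 <= f y) -> measurable_fun [set: Y] f ->
  \int[mu]_(x in E) f (phi x) = \int[mu]_x (f (phi x) * (g x)%:E).
Proof.
move=> f0 mf.
have mphiE A : measurable A -> measurable (phi @^-1` A).
  by move=> mA; rewrite -[_ @^-1` _]setTI; exact: mphi.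
pose h := nnsfun_approx measurableT mf.
have -> : \int[mu]_(x in E) f (phi x) =
    limn (fun n => \int[mu]_(x in E) (EFin \o h n) (phi x)).
  have fE x : f (phi x) = limn (fun n => (EFin \o h n) (phi x)).
    by apply/esym/cvg_lim => //; exact: cvg_nnsfun_approx.
  under eq_integral => x _ do rewrite fE.
  apply: monotone_convergence => //.
  - move=> n; apply/measurable_EFinP.
    apply: measurable_funTS; apply: measurableT_comp => //.
  - by move=> n x Ex //=; rewrite lee_fin.
  - by move=> x Ex a b ab; rewrite lee_fin; exact/lefP/nd_nnsfun_approx.
have -> : \int[mu]_x (f (phi x) * (g x)%:E) =
    limn (fun n => \int[mu]_x ((EFin \o h n) (phi x) * (g x)%:E)).
  have fg x : f (phi x) * (g x)%:E = limn (fun n => (EFin \o h n) (phi x) * (g x)%:E).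
    by apply/esym/cvg_lim => //; apply: cvgeZr => //; exact: cvg_nnsfun_approx.
  under eq_integral => x _ do rewrite fg.
  apply: monotone_convergence => [//| | |].
  - move=> n; apply/measurable_EFinP => /=; apply: measurable_funM => //.
    apply: measurableT_comp => //.
  - by move=> n x Ex /=; rewrite mule_ge0 ?lee_fin.
  - by move=> x Ex a b ab/=; rewrite lee_wpmul2r ?lee_fin//; exact/lefP/nd_nnsfun_approx.
suff suf n : \int[mu]_(x in E) (EFin \o h n) (phi x) =
    \int[mu]_x ((EFin \o h n) (phi x) * (g x)%:E).
  by under eq_fun do rewrite suf.
have mA r : measurable (phi @^-1` (h n @^-1` [set r])).
  by apply: mphiE; rewrite -[_ @^-1` _]setTI; exact: measurable_funP.
have ind r x : \1_(h n @^-1` [set r]) (phi x) = \1_(phi @^-1` (h n @^-1` [set r])) x :> R.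
  by rewrite !indicE.
have rge0 r : r \in range (h n) -> (0 <= r)%R.
  by rewrite inE => -[t _ <-].
transitivity (\sum_(r \in range (h n)) r%:E * mu (phi @^-1` (h n @^-1` [set r]) `&` E)).
  under eq_integral => x _ do rewrite /= fimfunE -fsumEFin//.
  rewrite ge0_integral_fsum//; last first.
    by move=> r x _; rewrite lee_fin; exact: nnfun_muleindic_ge0.
    move=> r; apply/measurable_EFinP; apply: measurable_funM => //.
    have -> : (fun x => \1_(h n @^-1` [set r]) (phi x)) = \1_(phi @^-1` (h n @^-1` [set r])) :> (X -> R).
      by apply/funext => x; exact: ind.
    exact: measurable_indic.
  apply: eq_fsbigr => r rh.
  under eq_integral do rewrite ind EFinM.
  rewrite ge0_integralZl_EFin ?rge0//; first by rewrite (integral_indic mu mE (mA r)).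
  by apply/measurable_EFinP; exact: measurable_indic.
rewrite (eq_integral (fun x => \sum_(r \in range (h n)) ((r * \1_(h n @^-1` [set r]) (phi x))%:E * (g x)%:E))); last first.
  move=> x _; rewrite /= fimfunE -fsumEFin// ge0_mule_fsuml// => r.
  by rewrite lee_fin; exact: nnfun_muleindic_ge0.
rewrite ge0_integral_fsum//; last first.
  by move=> r x _; rewrite mule_ge0 ?lee_fin//; exact: nnfun_muleindic_ge0.
  move=> r; apply/measurable_EFinP; apply: measurable_funM => //.
  apply: measurable_funM => //.
  have -> : (fun x => \1_(h n @^-1` [set r]) (phi x)) = \1_(phi @^-1` (h n @^-1` [set r])) :> (X -> R).
    by apply/funext => x; exact: ind.
  exact: measurable_indic.
apply: eq_fsbigr => r rh.
under eq_integral do rewrite ind EFinM -muleA.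
have mfr : measurable_fun [set: X] (fun x => (\1_(phi @^-1` (h n @^-1` [set r])) x)%:E * (g x)%:E).
  apply: emeasurable_funM; apply/measurable_EFinP => //; exact: measurable_indic.
have nnr : forall x, [set: X] x -> 0 <= (\1_(phi @^-1` (h n @^-1` [set r])) x)%:E * (g x)%:E.
  by move=> x _; rewrite mule_ge0 ?lee_fin.
rewrite ge0_integralZl_EFin ?rge0//.
rewrite setIC H//.
congr (_ * _); rewrite integral_mkcond; apply: eq_integral => x _.
by rewrite epatch_indic /= muleC.
Qed.
End L.

Lemma aux (R : realType) (x y : \bar R) : x \is a fin_num -> y = (x + y - x)%E.
Proof. by move=> hx; rewrite [(x + y)%E]addeC addeK. Qed.

Section Main.
Local Open Scope ereal_scope.
Context d (T : measurableType d) (R : realType).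
Variables (pi : probability (T * bool)%type R) (eta : T -> R).
Hypothesis hc : cond_prob_version pi eta.

Let meta : measurable_fun setT eta. Proof. by case: hc. Qed.
Let eta01 x : (0 <= eta x <= 1)%R. Proof. by case: hc. Qed.
Let heta A : measurable A ->
  pi (A `*` [set true]) = \int[pi]_(p in A `*` setT) (eta p.1)%:E.
Proof. by case: hc => _ _; apply. Qed.

Let w (b : bool) x : R := if b then eta x else (1 - eta x)%R.

Lemma mfst1 (u : T -> R) : measurable_fun setT u ->
  measurable_fun [set: T * bool] (fun p => u p.1).
Proof. by move=> mu; apply: measurableT_comp => //; exact: measurable_fst. Qed.

Lemma integrable_fst (u : T -> R) (M : R) : measurable_fun setT u ->
  (forall x, `|u x| <= M)%R ->
  pi.-integrable setT (EFin \o (fun p => u p.1)).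
Proof.
move=> mu uM; apply/integrableP; split.
  by apply/measurable_EFinP; exact: mfst1.
apply: (@le_lt_trans _ _ (\int[pi]_(p in setT) M%:E)).
  apply: ge0_le_integral => //.
  - apply: measurableT_comp; [exact: abse_measurable | apply/measurable_EFinP; exact: mfst1].
  - by move=> p _ /=; rewrite lee_fin (uM p.1).
rewrite (integral_cst pi measurableT M%:E).
set m := (X in _ * X); have -> : m = 1 by exact: probability_setT.
by rewrite mule1 ltry.
Qed.

Let mE b : measurable (setT `*` [set b] : set (T * bool)).
Proof. by apply: measurableX. Qed.

Lemma condL (b : bool) (psi : T -> \bar R) : (forall x, 0 <= psi x) ->
  measurable_fun setT psi ->
  \int[pi]_(p in setT `*` [set b]) psi p.1 = \int[pi]_p (psi p.1 * (w b p.1)%:E).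
Proof.
move=> psi0 mpsi.
have mw : measurable_fun setT (fun p : T * bool => w b p.1).
  by apply: mfst1; rewrite /w; case: (b) => //; apply: measurable_funB.
have w0 : forall p : T * bool, (0 <= w b p.1)%R.
  by move=> p; rewrite /w; case: (b); have := eta01 p.1; case/andP => ? ?; rewrite ?subr_ge0.
have H : forall A, measurable A -> pi (setT `*` [set b] `&` fst @^-1` A) =
    \int[pi]_(p in fst @^-1` A) (w b p.1)%:E.
  move=> A mA.
  have -> : fst @^-1` A = A `*` setT :> set (T * bool).
    by apply/seteqP; split => -[x y]; rewrite /preimage /setX /=; [move=> ?; split|case].
  have -> : setT `*` [set b] `&` A `*` setT = A `*` [set b] :> set (T * bool).
    by apply/seteqP; split => -[x y] /=; [case=> -[_ ->] [] |case=> ? ->].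
  have mAT : measurable (A `*` [set: bool] : set (T * bool)) by exact: measurableX.
  rewrite /w; case: (b); first exact: heta.
  have i1 : pi.-integrable (A `*` setT) (EFin \o (fun p : T * bool => (fun _ => 1%R) p.1)).
    apply: (integrableS measurableT mAT (@subsetT _ _)).
    by apply: (@integrable_fst (fun _ => 1%R) 1%R) => // x; rewrite normr1.
  have i2 : pi.-integrable (A `*` setT) (EFin \o (fun p : T * bool => eta p.1)).
    apply: (integrableS measurableT mAT (@subsetT _ _)).
    apply: (@integrable_fst eta 1%R) => // x.
    by have := eta01 x; case/andP => ? ?; rewrite ger0_norm.
  under eq_integral do rewrite EFinB.
  rewrite (integralB_EFin mAT i1 i2) -heta//.
  rewrite (_ : \int[pi]_(x in A `*` setT) _ = pi (A `*` setT)); last first.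
    by rewrite (integral_cst pi mAT 1%:E) mul1e.
  have -> : A `*` setT = (A `*` [set true]) `|` (A `*` [set false]) :> set (T * bool).
    apply/seteqP; split => -[x y]; rewrite /setX /setU /=.
      by case: y => -[]; [left|right].
    by case=> -[].
  rewrite measureU; [|exact: measurableX|exact: measurableX|].
    rewrite -[RHS]/(pi (A `*` [set true]) + pi (A `*` [set false]) - pi (A `*` [set true]))%E.
    apply: aux; rewrite fin_num_measure//; exact: measurableX.
  by apply/seteqP; split => -[x y] //; rewrite /setX /setI /=; case=> -[_ ->] [_].
exact: (@dens_L _ _ _ T R pi _ (mE b) (fun p => w b p.1) mw w0 fst measurable_fst H psi psi0 mpsi).
Qed.

Lemma splitL (u1 u0 : T -> R) : measurable_fun setT u1 -> measurable_fun setT u0 ->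
  (forall x, 0 <= u1 x)%R -> (forall x, 0 <= u0 x)%R ->
  \int[pi]_p (if p.2 then u1 p.1 else u0 p.1)%:E =
  \int[pi]_p (u1 p.1 * eta p.1 + u0 p.1 * (1 - eta p.1))%:E.
Proof.
move=> m1 m0 p1 p0.
have mF : measurable_fun [set: T * bool] (fun p => (if p.2 then u1 p.1 else u0 p.1)%:E).
  by apply/measurable_EFinP; exact: measurable_fun_if_pair.
have UT : [set: T * bool] = (setT `*` [set true]) `|` (setT `*` [set false]).
  apply/seteqP; split => -[x y]; rewrite /setX /setU /= => _; last by [].
  by case: y; [left|right].
rewrite {1}UT ge0_integral_setU //; last 3 first.
- by rewrite -UT.
- by move=> p _; case: (p.2); rewrite lee_fin.
- by apply/disj_setPS => -[x y]; rewrite /setX /setI /=; case=> -[_ ->] [].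
under eq_integral => p /[!inE] -[_ /= ->] do [].
under [X in _ + X = _]eq_integral => p /[!inE] -[_ /= ->] do [].
rewrite (condL true (fun x => (u1 x)%:E)) //; last exact/measurable_EFinP.
rewrite (condL false (fun x => (u0 x)%:E)) //; last exact/measurable_EFinP.
have mw0 : measurable_fun setT (fun x => 1 - eta x)%R by exact: measurable_funB.
have mA1 : measurable_fun [set: T * bool] (fun x : T * bool => (u1 x.1)%:E * (w true x.1)%:E).
  apply: emeasurable_funM; apply/measurable_EFinP; exact: mfst1.
have mA0 : measurable_fun [set: T * bool] (fun x : T * bool => (u0 x.1)%:E * (w false x.1)%:E).
  apply: emeasurable_funM; apply/measurable_EFinP; exact: mfst1.
rewrite -ge0_integralD //.
- by move=> p _; rewrite /w /= -EFinM lee_fin mulr_ge0 //; case/andP: (eta01 p.1).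
- by move=> p _; rewrite /w /= -EFinM lee_fin mulr_ge0 // subr_ge0; case/andP: (eta01 p.1).
Qed.

Definition bm (u : T -> R) := measurable_fun setT u /\ exists M : R, forall x, (`|u x| <= M)%R.

Definition JR (u : T -> R) : R := Rintegral pi setT (fun p => u p.1).

Lemma bm_int u : bm u -> pi.-integrable setT (EFin \o (fun p => u p.1)).
Proof. by case=> mu [M hM]; exact: (@integrable_fst u M). Qed.

Lemma Jint u : bm u -> \int[pi]_p (u p.1)%:E = (JR u)%:E.
Proof. by move=> bu; rewrite /JR /Rintegral fineK //; apply: integrable_fin_num => //; exact: bm_int. Qed.

Lemma JRD u v : bm u -> bm v -> JR (fun x => u x + v x)%R = (JR u + JR v)%R.
Proof. by move=> bu bv; rewrite /JR RintegralD //; exact: bm_int. Qed.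

Lemma JRZ c u : bm u -> JR (fun x => c * u x)%R = (c * JR u)%R.
Proof. by move=> bu; rewrite /JR RintegralZl //; exact: bm_int. Qed.

Lemma JR_le u v : bm u -> bm v -> (forall x, u x <= v x)%R -> (JR u <= JR v)%R.
Proof. by move=> bu bv uv; rewrite /JR le_Rintegral //; exact: bm_int. Qed.

Lemma JR_ge0 u : (forall x, 0 <= u x)%R -> (0 <= JR u)%R.
Proof. by move=> u0; rewrite /JR Rintegral_ge0. Qed.

Lemma JR_eq u v : (forall x, u x = v x) -> JR u = JR v.
Proof. by move=> uv; rewrite /JR; congr Rintegral; apply/funext => p; rewrite uv. Qed.

Lemma bmD u v : bm u -> bm v -> bm (fun x => u x + v x)%R.
Proof.
case=> mu [M hM] [mv [N hN]]; split; first exact: measurable_funD.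
by exists (M + N)%R => x; rewrite (le_trans (ler_normD _ _)) // lerD.
Qed.

Lemma bmZ c u : bm u -> bm (fun x => c * u x)%R.
Proof.
case=> mu [M hM]; split; first exact: measurable_funM.
by exists (`|c| * M)%R => x; rewrite normrM ler_wpM2l.
Qed.

Lemma bmM u v : bm u -> bm v -> bm (fun x => u x * v x)%R.
Proof.
case=> mu [M hM] [mv [N hN]]; split; first exact: measurable_funM.
exists (M * N)%R => x; rewrite normrM ler_pM //.
Qed.

Lemma bm_cst c : bm (fun _ => c).
Proof. by split; [exact: measurable_cst | exists `|c|%R]. Qed.

Lemma bm_norm u : bm u -> bm (fun x => `|u x|)%R.
Proof.
case=> mu [M hM]; split; last by exists M => x; rewrite normr_id.
by apply: measurableT_comp => //; exact: normr_measurable.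
Qed.

Lemma bm_eta : bm eta.
Proof.
split => //; exists 1%R => x; have /andP[e0 e1] := eta01 x.
by rewrite ger0_norm.
Qed.

Lemma bm_B u v : bm u -> bm v -> bm (fun x => u x - v x)%R.
Proof.
move=> bu bv; have := bmD _ _ bu (bmZ (-1) _ bv).
by congr bm; apply/funext => x; rewrite mulN1r.
Qed.

Let h x : R := `|2 * eta x - 1|%R.

Lemma h01 x : (0 <= h x <= 1)%R.
Proof.
have /andP[e0 e1] := eta01 x; rewrite /h normr_ge0 /=.
case: (sgn1_cases _ (2 * eta x - 1)%R) => -[H [_ ->]]; lra.
Qed.

Lemma bm_h : bm h.
Proof. exact: (bm_norm _ (bm_B _ _ (bmZ 2 _ bm_eta) (bm_cst 1))). Qed.

Lemma fs_pm x : (bayes eta x = 1 \/ bayes eta x = -1)%R.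
Proof. by rewrite /bayes /sgn1; case: ifP; [left|right]. Qed.

Lemma fs_h x : (bayes eta x * (2 * eta x - 1) = h x)%R.
Proof.
rewrite /bayes /h; case: (sgn1_cases _ (2 * eta x - 1)%R) => -[H [-> ->]]; lra.
Qed.

Lemma bm_fs : bm (bayes eta).
Proof.
split; last by exists 1%R => x; case: (fs_pm x) => ->; rewrite ?normrN normr1.
rewrite /bayes /sgn1; apply: measurable_fun_ifT => //.
apply: measurable_fun_ler => //.
by apply: measurable_funB => //; apply: measurable_funM.
Qed.

Lemma bm_pm (f : T -> R) : measurable_fun setT f -> (forall x, f x = 1 \/ f x = -1)%R -> bm f.
Proof.
by move=> mf hf; split => //; exists 1%R => x; case: (hf x) => ->; rewrite ?normrN normr1.
Qed.

Lemma risk_eq (f : T -> R) : measurable_fun setT f -> (forall x, f x = 1 \/ f x = -1)%R ->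
  risk pi f = (JR (fun x => (1 - h x) / 2) + JR (fun x => h x * `|f x - bayes eta x|) / 2)%:E.
Proof.
move=> mf hf.
pose g := fun p : T * bool => if p.2 then ((1 - f p.1) / 2)%R else ((1 + f p.1) / 2)%R.
have hg p : ((ylab p.2 != f p.1) /\ g p = 1%R) \/ (~~ (ylab p.2 != f p.1) /\ g p = 0%R).
  case: p => x [] /=; rewrite /g /ylab /=; case: (hf x) => ->.
  - by right; rewrite eqxx; split => //; lra.
  - left; split; last lra.
    by apply/negP => /eqP; lra.
  - left; split; last lra.
    by apply/negP => /eqP; lra.
  - by right; rewrite eqxx; split => //; lra.
have mg : measurable_fun setT g.
  apply: (measurable_fun_if_pair (x := fun x => ((1 - f x) / 2)%R) (y := fun x => ((1 + f x) / 2)%R)).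
    by apply: measurable_funM => //; apply: measurable_funB.
  by apply: measurable_funM => //; apply: measurable_funD.
have mS : measurable [set p : T * bool | ylab p.2 != f p.1].
  have -> : [set p : T * bool | ylab p.2 != f p.1] = g @^-1` [set 1%R].
    apply/seteqP; split => p; case: (hg p) => -[H E] //=; rewrite /preimage /= E.
    - by move=> H'; move: H; rewrite H'.
    - move=> E'; exfalso; move: E'; apply/eqP; lra.
  by rewrite -[_ @^-1` _]setTI; apply: mg => //; exact: measurable_set1.
rewrite /risk (_ : [set p | ylab p.2 != f p.1] = [set p | ylab p.2 != f p.1] `&` setT); last by rewrite setIT.
rewrite -(integral_indic pi measurableT mS).
transitivity (\int[pi]_p (g p)%:E).
  apply: eq_integral => p _; rewrite indicE; case: (hg p) => -[H ->].
    by rewrite mem_set.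
  by rewrite memNset //; apply/negP.
have m1 : measurable_fun setT (fun x => (1 - f x) / 2)%R.
  by apply: measurable_funM => //; apply: measurable_funB.
have m0 : measurable_fun setT (fun x => (1 + f x) / 2)%R.
  by apply: measurable_funM => //; apply: measurable_funD.
have p1 x : (0 <= (1 - f x) / 2)%R by case: (hf x) => ->; lra.
have p0 x : (0 <= (1 + f x) / 2)%R by case: (hf x) => ->; lra.
have := splitL _ _ m1 m0 p1 p0; rewrite /= => ->.
have bf := bm_pm f mf hf.
have b1 : bm (fun x => (1 - h x) / 2)%R.
  exact: (bmM _ _ (bm_B _ _ (bm_cst 1) bm_h) (bm_cst _)).
have b2 : bm (fun x => h x * `|f x - bayes eta x|)%R.
  exact: (bmM _ _ bm_h (bm_norm _ (bm_B _ _ bf bm_fs))).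
rewrite [(JR _ / 2)%R]mulrC -JRZ // -JRD //; last exact: bmZ.
rewrite -Jint; last exact: bmD _ _ b1 (bmZ _ _ b2).
apply: eq_integral => p _; congr EFin.
rewrite pw_risk //; rewrite /h /bayes; lra.
Qed.

Lemma hinge_eq (f : T -> R) : measurable_fun setT f ->
  hinge_risk pi f = \int[pi]_p (Num.max (1 - f p.1) 0 * eta p.1 + Num.max (1 + f p.1) 0 * (1 - eta p.1))%:E.
Proof.
move=> mf.
have m1 : measurable_fun setT (fun x => Num.max (1 - f x) 0)%R.
  by apply: measurable_maxr => //; apply: measurable_funB.
have m0 : measurable_fun setT (fun x => Num.max (1 + f x) 0)%R.
  by apply: measurable_maxr => //; apply: measurable_funD.
have p1 x : (0 <= Num.max (1 - f x) 0)%R by rewrite le_max lexx orbT.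
have p0 x : (0 <= Num.max (1 + f x) 0)%R by rewrite le_max lexx orbT.
rewrite -(splitL _ _ m1 m0 p1 p0) /hinge_risk.
apply: eq_integral => -[x []] _ /=; rewrite /ylab ?mul1r ?mulN1r ?opprK //.
Qed.

Lemma hinge_eqB (f : T -> R) : measurable_fun setT f -> (forall x, -1 <= f x <= 1)%R ->
  hinge_risk pi f = (JR (fun x => 1 - h x) + JR (fun x => h x * `|f x - bayes eta x|))%:E.
Proof.
move=> mf hf.
have bf : bm f by split => //; exists 1%R => x; rewrite ler_norml; exact: hf.
have b1 : bm (fun x => (1 - h x))%R by exact: (bm_B _ _ (bm_cst 1) bm_h).
have b2 : bm (fun x => h x * `|f x - bayes eta x|)%R.
  exact: (bmM _ _ bm_h (bm_norm _ (bm_B _ _ bf bm_fs))).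
rewrite hinge_eq // -JRD // -Jint; last exact: bmD.
apply: eq_integral => p _; congr EFin.
by rewrite pw_hinge_eq.
Qed.

Lemma JR_fs0 : JR (fun x => h x * `|bayes eta x - bayes eta x|)%R = 0%R.
Proof.
rewrite (JR_eq _ (fun _ => 0%R)); last by move=> x; rewrite subrr normr0 mulr0.
by rewrite /JR Rintegral_cst // mul0r.
Qed.

Lemma hstar : hinge_risk_star pi = (JR (fun x => 1 - h x)%R)%:E.
Proof.
have mfs : measurable_fun setT (bayes eta) by case: bm_fs.
have fs1 x : (-1 <= bayes eta x <= 1)%R by case: (fs_pm x) => ->; lra.
apply/eqP; rewrite eq_le; apply/andP; split.
  apply: ge_ereal_inf; exists (hinge_risk pi (bayes eta)).
    by exists (bayes eta).
  by rewrite hinge_eqB // JR_fs0 addr0.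
apply: le_ereal_inf_tmp => _ [g mg <-].
rewrite hinge_eq // -Jint; last exact: (bm_B _ _ (bm_cst 1) bm_h).
apply: ge0_le_integral => //.
- by move=> p _; rewrite lee_fin subr_ge0; case/andP: (h01 p.1).
- apply/measurable_EFinP; apply: (mfst1 (fun x => 1 - h x)%R); apply: measurable_funB => //; by case: bm_h.
- apply/measurable_EFinP; apply: (mfst1 (fun x => Num.max (1 - g x) 0 * eta x + Num.max (1 + g x) 0 * (1 - eta x))%R).
  apply: measurable_funD; apply: measurable_funM => //.
  + by apply: measurable_maxr => //; apply: measurable_funB.
  + by apply: measurable_maxr => //; apply: measurable_funD.
  + exact: measurable_funB.
- by move=> p _; rewrite lee_fin; apply: pw_hinge_ge.
Qed.

Definition nn (f : T -> R) := JR (fun x => `|f x - bayes eta x|)%R.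
Definition qq (f : T -> R) := JR (fun x => h x * `|f x - bayes eta x|)%R.

Lemma mfs : measurable_fun setT (bayes eta).
Proof. by case: bm_fs. Qed.

Lemma l1_eq (f : T -> R) : bm f -> l1_dist pi eta f = (nn f)%:E.
Proof.
move=> bf; rewrite /l1_dist (Jint (fun x => `|f x - bayes eta x|%R)) //; exact: (bm_norm _ (bm_B _ _ bf bm_fs)).
Qed.

Lemma risk_diff (f : T -> R) : measurable_fun setT f -> (forall x, f x = 1 \/ f x = -1)%R ->
  fine (risk pi f - risk pi (bayes eta)) = (qq f / 2)%R.
Proof.
move=> mf hf; rewrite (risk_eq f mf hf) (risk_eq _ mfs fs_pm) -/(qq f).
rewrite JR_fs0 -EFinB /=; ring.
Qed.

Lemma hinge_diff (f : T -> R) : measurable_fun setT f -> (forall x, -1 <= f x <= 1)%R ->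
  fine (hinge_risk pi f - hinge_risk_star pi) = qq f.
Proof.
move=> mf hf; rewrite (hinge_eqB f mf hf) hstar -EFinB /=; rewrite /qq; ring.
Qed.

Lemma nn_ge0 f : (0 <= nn f)%R.
Proof. by apply: JR_ge0 => x. Qed.

Lemma qq_ge0 f : (0 <= qq f)%R.
Proof. by apply: JR_ge0 => x; rewrite mulr_ge0 //; case/andP: (h01 x). Qed.

Lemma main_iff (kappa : R) : (1 <= kappa)%R -> MA pi eta kappa <-> MAH pi eta kappa.
Proof.
move=> k1; have k0 : (0 < kappa)%R by apply: lt_le_trans k1.
split.
- move=> [c0 [c00 H0]].
  pose K := (c0 `^ kappa / 2)%R.
  have K0 : (0 < K)%R by rewrite /K divr_gt0 // powR_gt0.
  exists (1 + 2 * K)%R; split; first lra.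
  move=> f mf hf.
  have bf : bm f by split => //; exists 1%R => x; rewrite ler_norml; exact: hf.
  rewrite l1_eq // hinge_diff // lee_fin.
  apply: key => //; first exact: nn_ge0.
    exact: qq_ge0.
  move=> t t0.
  pose ft := fun x => if (h x <= t)%R then (- bayes eta x)%R else bayes eta x.
  have mft : measurable_fun setT ft.
    apply: measurable_fun_ifT.
    - apply: measurable_fun_ler => //; by case: bm_h.
    - by apply: measurableT_comp => //; exact: mfs.
    - exact: mfs.
  have ft_pm x : (ft x = 1 \/ ft x = -1)%R.
    by rewrite /ft; case: ifP => _; case: (fs_pm x) => ->; rewrite ?opprK; [right|left|left|right].
  have bft : bm ft by exact: bm_pm.
  have bnf : bm (fun x => `|f x - bayes eta x|)%R by exact: (bm_norm _ (bm_B _ _ bf bm_fs)).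
  have bnft : bm (fun x => `|ft x - bayes eta x|)%R by exact: (bm_norm _ (bm_B _ _ bft bm_fs)).
  have bqf : bm (fun x => h x * `|f x - bayes eta x|)%R by exact: bmM _ _ bm_h bnf.
  have bqft : bm (fun x => h x * `|ft x - bayes eta x|)%R by exact: bmM _ _ bm_h bnft.
  exists (nn ft); split; first exact: nn_ge0.
  + rewrite /nn /qq mulrC -JRZ // -JRD //; last exact: bmZ.
    apply: JR_le => //; first by apply: bmD => //; exact: bmZ.
    move=> x; rewrite /ft; case: ifPn => hx.
      have -> : (`|- bayes eta x - bayes eta x| = 2)%R.
        by case: (fs_pm x) => ->; rewrite -?opprD ?opprK ?normrN; apply/ger0_norm; lra.
      have : (`|f x - bayes eta x| <= 2)%R.
        by rewrite ler_norml; have := hf x; case: (fs_pm x) => ->; lra.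
      have : (0 <= t^-1 * (h x * `|f x - bayes eta x|))%R.
        apply: mulr_ge0; first by rewrite invr_ge0 ltW.
        by apply: mulr_ge0 => //; case/andP: (h01 x).
      lra.
    rewrite subrr normr0 add0r mulrA.
    rewrite -ltNge in hx.
    have : (1 <= t^-1 * h x)%R by rewrite ler_pdivlMl // mulr1 ltW.
    have := normr_ge0 (f x - bayes eta x)%R.
    nra.
  + have hq : (qq ft <= t * nn ft)%R.
      rewrite /qq /nn -JRZ //; apply: JR_le => //; first exact: bmZ.
      move=> x; rewrite /ft; case: ifPn => hx; last by rewrite subrr normr0 !mulr0.
      by rewrite ler_wpM2r.
    have := H0 ft mft ft_pm.
    rewrite l1_eq // risk_diff // lee_fin => hn.
    have qh0 : (0 <= qq ft / 2)%R by rewrite divr_ge0 // qq_ge0.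
    have e : (c0 * (qq ft / 2) `^ kappa^-1 = (c0 `^ kappa * (qq ft / 2)) `^ kappa^-1)%R.
      by rewrite [RHS]powRM ?powR_ge0 // powR_invk // ltW.
    rewrite e in hn.
    have h2 := le_powR_inv _ _ _ _ (nn_ge0 ft) (mulr_ge0 (powR_ge0 _ _) qh0) k0 hn.
    apply: (le_trans h2).
    rewrite /K; have := nn_ge0 ft; have := qq_ge0 ft; have := powR_ge0 c0 kappa; nra.
- move=> [c [c0 H]].
  exists (c * 2 `^ kappa^-1)%R; split; first by rewrite mulr_gt0 // powR_gt0.
  move=> f mf hf.
  have hf' x : (-1 <= f x <= 1)%R by case: (hf x) => ->; lra.
  have := H f mf hf'.
  rewrite hinge_diff // risk_diff //.
  rewrite -mulrA -powRM //; last by rewrite divr_ge0 // qq_ge0.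
  by have -> : (2 * (qq f / 2) = qq f)%R by field.
Qed.

End Main.

Theorem proposition1 (d : measure_display) (T : measurableType d) (R : realType)
  (pi : probability (T * bool)%type R) (eta : T -> R) (kappa : R) :
  cond_prob_version pi eta -> 1 <= kappa ->
  MA pi eta kappa <-> MAH pi eta kappa.
Proof. by move=> hc k1; exact: (main_iff _ _ _ _ _ hc kappa k1). Qed.
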